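(* Let $\Omega$ be a standard star graph and let $f$ be a generic eigenfunction of $\Omega$ with eigenvalue $k^2$ ($k>0$). Assume $f$ has no Neumann points. Then there exists a standard star graph $\widetilde\Omega$ such that: (1) $|\partial\Omega|=|\partial\widetilde\Omega|$; (2) there is a generic eigenfunction $\tilde f$ of $\widetilde\Omega$ with eigenvalue $k^2$; (3) $\tilde f$ has no Neumann points, so $\widetilde\Omega$ is its single Neumann domain; (4) $N(\Omega)+N(\widetilde\Omega)=|\partial\Omega|$ and $\rho(\Omega)+\rho(\widetilde\Omega)=|\partial\Omega|$, where spectral positions and wavelength capacities are taken with respect to $k$.
   Context: A star graph consists of a central vertex joined by edges to degree-one vertices; regarded as a standard graph it carries the Laplacian $-d^2/dx^2$ with Neumann (Kirchhoff) vertex conditions (continuity and vanishing sum of outgoing derivatives). $\partial\Omega$ is the set of degree-one vertices. An eigenfunction is generic if its eigenvalue is simple, it is nonzero at every vertex, and its outgoing derivatives at the non-boundary vertices are nonzero. Neumann points of $f$ are points in edge interiors where $f'=0$. For a graph $\Omega$ with total edge length $|\Omega|$: $N(\Omega):=|\{0\le\lambda<k^2:\lambda\text{ eigenvalue of }\Omega\}|$ (with multiplicity) and $\rho(\Omega):=|\Omega|k/\pi$. *)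

(* Defs.v *)
From Stdlib Require Import Reals Lra List.
From Coquelicot Require Import Coquelicot.
Open Scope R_scope.

(** A star graph with [m] edges: edge [i] (for [i < m]) has length [l i] and is
    parametrised by [x ∈ [0, l i]], where [x = 0] is the degree-one (boundary)
    vertex and [x = l i] is the central vertex.  A function on the graph is
    [f : nat -> R -> R], [f i] being its restriction to edge [i]; only the
    values on [[0, l i]] matter. *)

Definition star_graph (m : nat) (l : nat -> R) : Prop :=
  (2 <= m)%nat /\ forall i, (i < m)%nat -> 0 < l i.

Definition sumR (m : nat) (g : nat -> R) : R :=
  fold_right Rplus 0 (map g (seq 0 m)).

Definition total_length (m : nat) (l : nat -> R) : R := sumR m l.

(** [f] solves -f'' = lam f on every edge, with standard (Neumann/Kirchhoff)
    vertex conditions: f'(0) = 0 at each degree-one vertex, continuity at the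
    centre, and the sum of the outgoing derivatives (-f_i'(l_i)) at the centre
    is zero.  (The zero function is allowed: this describes the eigenspace.) *)
Definition eig_solution (m : nat) (l : nat -> R) (lam : R) (f : nat -> R -> R) : Prop :=
  (forall i x, (i < m)%nat -> 0 <= x <= l i ->
     ex_derive (f i) x /\ ex_derive (Derive (f i)) x /\
     - Derive_n (f i) 2 x = lam * f i x) /\
  (forall i, (i < m)%nat -> Derive (f i) 0 = 0) /\
  (forall i j, (i < m)%nat -> (j < m)%nat -> f i (l i) = f j (l j)) /\
  sumR m (fun i => - Derive (f i) (l i)) = 0.

Definition nonzero_on (m : nat) (l : nat -> R) (f : nat -> R -> R) : Prop :=
  exists i x, (i < m)%nat /\ 0 <= x <= l i /\ f i x <> 0.

Definition is_eigenfunction (m : nat) (l : nat -> R) (lam : R) (f : nat -> R -> R) : Prop :=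
  eig_solution m l lam f /\ nonzero_on m l f.

Definition is_eigenvalue (m : nat) (l : nat -> R) (lam : R) : Prop :=
  exists f, is_eigenfunction m l lam f.

Definition lin_indep (m : nat) (l : nat -> R) (d : nat) (g : nat -> nat -> R -> R) : Prop :=
  forall c : nat -> R,
    (forall i x, (i < m)%nat -> 0 <= x <= l i ->
        sumR d (fun j => c j * g j i x) = 0) ->
    forall j, (j < d)%nat -> c j = 0.

Definition multiplicity (m : nat) (l : nat -> R) (lam : R) (d : nat) : Prop :=
  (exists g, (forall j, (j < d)%nat -> eig_solution m l lam (g j)) /\ lin_indep m l d g) /\
  ~ (exists g, (forall j, (j < S d)%nat -> eig_solution m l lam (g j)) /\ lin_indep m l (S d) g).

Definition simple_eigenvalue (m : nat) (l : nat -> R) (lam : R) : Prop :=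
  multiplicity m l lam 1.

(** Generic eigenfunction: simple eigenvalue, nonzero at every vertex,
    nonzero outgoing derivatives at the (only) non-boundary vertex, the centre. *)
Definition generic_eigenfunction (m : nat) (l : nat -> R) (lam : R) (f : nat -> R -> R) : Prop :=
  is_eigenfunction m l lam f /\
  simple_eigenvalue m l lam /\
  (forall i, (i < m)%nat -> f i 0 <> 0) /\
  (forall i, (i < m)%nat -> f i (l i) <> 0) /\
  (forall i, (i < m)%nat -> - Derive (f i) (l i) <> 0).

Definition is_neumann_point (m : nat) (l : nat -> R) (f : nat -> R -> R) (i : nat) (x : R) : Prop :=
  (i < m)%nat /\ 0 < x < l i /\ Derive (f i) x = 0.

Definition no_neumann_points (m : nat) (l : nat -> R) (f : nat -> R -> R) : Prop :=
  forall i x, ~ is_neumann_point m l f i x.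

Definition spectral_position (m : nat) (l : nat -> R) (k : R) (n : nat) : Prop :=
  exists (lams : list R) (ds : list nat),
    NoDup lams /\
    (forall lam, In lam lams <-> (0 <= lam < k ^ 2 /\ is_eigenvalue m l lam)) /\
    length ds = length lams /\
    (forall j, (j < length lams)%nat -> multiplicity m l (nth j lams 0) (nth j ds 0%nat)) /\
    n = fold_right Nat.add 0%nat ds.

Definition wavelength_capacity (m : nat) (l : nat -> R) (k : R) : R :=
  total_length m l * k / PI.

(** |∂Omega| for a star graph with m >= 2 edges is m. *)
Definition num_boundary (m : nat) : nat := m.

(* Main.v *)
Require Import Defs.
From Stdlib Require Import Reals Lra Lia List Classical.
From Coquelicot Require Import Coquelicot.
Open Scope R_scope.

Lemma sumR_0 g : sumR 0 g = 0.
Proof. reflexivity. Qed.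

Lemma fold_app_R (l1 l2 : list R) : fold_right Rplus 0 (l1 ++ l2) = fold_right Rplus 0 l1 + fold_right Rplus 0 l2.
Proof. induction l1; simpl; [ring | rewrite IHl1; ring]. Qed.

Lemma sumR_S m g : sumR (S m) g = sumR m g + g m.
Proof. unfold sumR. rewrite seq_S, map_app, fold_app_R. simpl. ring. Qed.

Lemma sumR_ext m g h : (forall i, (i < m)%nat -> g i = h i) -> sumR m g = sumR m h.
Proof. induction m; intros H; [reflexivity|]. rewrite !sumR_S, IHm, H; auto. Qed.

Lemma sumR_plus m g h : sumR m (fun i => g i + h i) = sumR m g + sumR m h.
Proof. induction m; [simpl; unfold sumR; simpl; ring|]. rewrite !sumR_S, IHm. ring. Qed.

Lemma sumR_scal m c g : sumR m (fun i => c * g i) = c * sumR m g.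
Proof. induction m; [unfold sumR; simpl; ring|]. rewrite !sumR_S, IHm. ring. Qed.

Lemma sumR_scal_r m c g : sumR m (fun i => g i * c) = sumR m g * c.
Proof. induction m; [unfold sumR; simpl; ring|]. rewrite !sumR_S, IHm. ring. Qed.

Lemma sumR_opp m g : sumR m (fun i => - g i) = - sumR m g.
Proof. induction m; [unfold sumR; simpl; ring|]. rewrite !sumR_S, IHm. ring. Qed.

Lemma sumR_zero m g : (forall i, (i < m)%nat -> g i = 0) -> sumR m g = 0.
Proof. intros H. rewrite (sumR_ext m g (fun _ => 0)); auto. clear H. induction m; [reflexivity|]. rewrite sumR_S, IHm; ring. Qed.

Lemma sumR_const m c : sumR m (fun _ => c) = INR m * c.
Proof. induction m; [unfold sumR; simpl; ring|]. rewrite sumR_S, IHm, S_INR. ring. Qed.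

Lemma sumR_le m g h : (forall i, (i < m)%nat -> g i <= h i) -> sumR m g <= sumR m h.
Proof. induction m; intros H; [unfold sumR; simpl; lra|]. rewrite !sumR_S. assert (g m <= h m) by auto. assert (sumR m g <= sumR m h) by auto. lra. Qed.

Lemma sumR_lt m g h : (0 < m)%nat -> (forall i, (i < m)%nat -> g i < h i) -> sumR m g < sumR m h.
Proof. intros Hm H. destruct m; [lia|]. rewrite !sumR_S. assert (g m < h m) by auto. assert (sumR m g <= sumR m h) by (apply sumR_le; intros; left; auto). lra. Qed.

Lemma sumR_ge_term m g j : (forall i, (i < m)%nat -> 0 <= g i) -> (j < m)%nat -> g j <= sumR m g.
Proof. induction m; intros H Hj; [lia|]. rewrite sumR_S. assert (0 <= sumR m g) by (rewrite <- (sumR_zero m (fun _ => 0)) by auto; apply sumR_le; auto).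
 destruct (Nat.eq_dec j m). subst. lra. assert (g j <= sumR m g) by (apply IHm; auto; lia). assert (0 <= g m) by auto. lra. Qed.

Lemma sumR_le_term m g j : (forall i, (i < m)%nat -> g i <= 0) -> (j < m)%nat -> sumR m g <= g j.
Proof. intros H Hj. assert (- g j <= sumR m (fun i => - g i)) by (apply (sumR_ge_term m (fun i => - g i)); auto; intros i Hi; specialize (H i Hi); lra).
 rewrite sumR_opp in H0. lra. Qed.

Lemma sumR_swap d r (F : nat -> nat -> R) : sumR d (fun j => sumR r (fun s => F j s)) = sumR r (fun s => sumR d (fun j => F j s)).
Proof. induction d. unfold sumR at 1; simpl. symmetry. apply sumR_zero. intros; reflexivity.
 rewrite sumR_S, IHd. rewrite <- sumR_plus. apply sumR_ext. intros. rewrite sumR_S. reflexivity. Qed.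

Lemma sumR_delta m x h : (x < m)%nat -> sumR m (fun i => if Nat.eq_dec i x then h i else 0) = h x.
Proof. induction m; intros Hx; [lia|]. rewrite sumR_S. destruct (Nat.eq_dec m x).
 - subst. rewrite sumR_zero. ring. intros i Hi. match goal with |- context [Nat.eq_dec i ?y] => destruct (Nat.eq_dec i y); [lia|auto] end.
 - rewrite IHm by lia. ring. Qed.

Lemma sumR_reindex n' h j0 : (j0 < S n')%nat ->
  sumR (S n') h = sumR n' (fun j => h (if Nat.eq_dec j j0 then n' else j)) + h j0.
Proof. intros Hj. rewrite sumR_S. destruct (Nat.eq_dec j0 n').
 - subst. rewrite (sumR_ext n' (fun j => h (if Nat.eq_dec j n' then n' else j)) h). ring. intros i Hi. destruct (Nat.eq_dec i n'); [lia|auto].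
 - rewrite (sumR_ext n' (fun j => h (if Nat.eq_dec j j0 then n' else j)) (fun j => h j + (if Nat.eq_dec j j0 then h n' - h j0 else 0))).
   rewrite sumR_plus, sumR_delta by lia. ring.
   intros i Hi. destruct (Nat.eq_dec i j0); [subst; ring| ring]. Qed.

Lemma steinitz : forall D n, (D < n)%nat -> forall v : nat -> nat -> R,
  exists c : nat -> R, (exists j, (j < n)%nat /\ c j <> 0) /\
    forall t, (t < D)%nat -> sumR n (fun j => c j * v j t) = 0.
Proof.
  induction D as [|D IH]; intros n Hn v.
  - exists (fun _ => 1). split. exists 0%nat. split; [lia|lra]. intros; lia.
  - destruct (classic (exists j0, (j0 < n)%nat /\ v j0 D <> 0)) as [[j0 [Hj0 Hv]]|Hall].
    + destruct n as [|n']; [lia|].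
      set (sig := fun j => if Nat.eq_dec j j0 then n' else j).
      set (beta := fun j => v (sig j) D / v j0 D).
      set (u := fun j t => v (sig j) t - beta j * v j0 t).
      destruct (IH n' ltac:(lia) u) as [c' [[j1 [Hj1 Hc1]] Hc']].
      set (alpha := - sumR n' (fun j => c' j * beta j)).
      set (cf := fun i => if Nat.eq_dec i j0 then alpha else if Nat.eq_dec i n' then c' j0 else c' i).
      exists cf.
      assert (Hcs : forall j, (j < n')%nat -> cf (sig j) = c' j).
      { intros j Hj. unfold cf, sig. destruct (Nat.eq_dec j j0).
        - subst. destruct (Nat.eq_dec n' j0); [lia|]. destruct (Nat.eq_dec n' n'); [auto|lia].
        - destruct (Nat.eq_dec j j0); [lia|]. destruct (Nat.eq_dec j n'); [lia|auto]. }
      split.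
      * exists (sig j1). split. unfold sig; destruct (Nat.eq_dec j1 j0); lia. rewrite Hcs; auto.
      * intros t Ht. rewrite sumR_reindex with (j0 := j0) by auto.
        rewrite (sumR_ext n' _ (fun j => c' j * u j t + (c' j * beta j) * v j0 t)).
        2:{ intros j Hj. change (if Nat.eq_dec j j0 then n' else j) with (sig j). rewrite Hcs by auto. unfold u. ring. }
        rewrite sumR_plus, sumR_scal_r.
        unfold cf. destruct (Nat.eq_dec j0 j0); [|lia].
        assert (sumR n' (fun j => c' j * u j t) = 0).
        { destruct (Nat.eq_dec t D).
          - subst. apply sumR_zero. intros j Hj. unfold u, beta. field_simplify; auto. 
          - apply Hc'. lia. }
        rewrite H. unfold alpha. ring.
    + destruct (IH n ltac:(lia) v) as [c [Hnz Hc]]. exists c. split; auto.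
      intros t Ht. destruct (Nat.eq_dec t D).
      * subst. apply sumR_zero. intros j Hj. destruct (Req_dec (v j D) 0) as [E|E].
        rewrite E; ring. exfalso; apply Hall; eauto.
      * apply Hc; lia.
Qed.


Lemma is_derive_cont h x l : is_derive h x l -> continuity_pt h x.
Proof. intros H. apply continuity_pt_filterlim. apply (ex_derive_continuous h x). exists l; auto. Qed.

Lemma const_on h a b : (forall x, a <= x <= b -> is_derive h x 0) -> forall x, a <= x <= b -> h x = h a.
Proof. intros H x Hx. destruct (Req_dec x a) as [E|E]; [subst; auto|].
  destruct (MVT_gen h a x (fun _ => 0)) as [c [Hc Hm]].
  - intros y Hy. apply H. rewrite Rmin_left in Hy by lra. rewrite Rmax_right in Hy by lra. lra.
  - intros y Hy. rewrite Rmin_left in Hy by lra. rewrite Rmax_right in Hy by lra. apply (is_derive_cont h y 0). apply H; lra.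
  - lra. Qed.

Lemma edge_char (g : R -> R) mu L :
  (forall x, 0 <= x <= L -> ex_derive g x /\ ex_derive (Derive g) x /\ - Derive_n g 2 x = mu ^ 2 * g x) ->
  Derive g 0 = 0 -> 0 <= L ->
  forall x, 0 <= x <= L -> Derive g x = - g 0 * mu * sin (mu * x) /\ g x = g 0 * cos (mu * x).
Proof.
  intros H H0 HL.
  set (g0 := g 0).
  set (E := fun x => (Derive g x + g0 * mu * sin (mu * x)) ^ 2 + mu ^ 2 * (g x - g0 * cos (mu * x)) ^ 2).
  assert (HE : forall x, 0 <= x <= L -> is_derive E x 0).
  { intros x Hx. destruct (H x Hx) as [H1 [H2 H3]].
    assert (HD2 : Derive (fun x0 => Derive g x0) x = -(mu^2*g x)). { change (Derive_n g 2 x = - (mu^2 * g x)). lra. }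
    unfold E. auto_derive. repeat split; auto.
    rewrite HD2. change (Derive (fun x0 => g x0) x) with (Derive g x). ring. }
  assert (HE0 : E 0 = 0). { unfold E. rewrite H0. rewrite Rmult_0_r, sin_0, cos_0. unfold g0. ring. }
  assert (HD : forall x, 0 <= x <= L -> Derive g x = - g0 * mu * sin (mu * x)).
  { intros x Hx. pose proof (const_on E 0 L HE x Hx) as Ex. rewrite HE0 in Ex. unfold E in Ex.
    assert (0 <= (Derive g x + g0 * mu * sin (mu * x)) ^ 2) by apply pow2_ge_0.
    assert (0 <= mu ^ 2 * (g x - g0 * cos (mu * x)) ^ 2) by (apply Rmult_le_pos; apply pow2_ge_0).
    assert ((Derive g x + g0 * mu * sin (mu * x)) ^ 2 = 0) by lra.
    assert (Hz : (Derive g x + g0 * mu * sin (mu * x)) * (Derive g x + g0 * mu * sin (mu * x)) = 0) by (rewrite <- H3; ring). apply Rmult_integral in Hz. lra. }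
  set (h := fun x => g x - g0 * cos (mu * x)).
  assert (Hh : forall x, 0 <= x <= L -> is_derive h x 0).
  { intros x Hx. destruct (H x Hx) as [H1 _]. unfold h. auto_derive. auto. rewrite HD by auto. ring. }
  intros x Hx. split. apply HD; auto.
  pose proof (const_on h 0 L Hh x Hx). unfold h in H1. rewrite Rmult_0_r, cos_0 in H1. unfold g0 in *. lra.
Qed.


Definition solvec (m : nat) (l : nat -> R) (mu : R) (a : nat -> R) : Prop :=
  (forall i j, (i < m)%nat -> (j < m)%nat -> a i * cos (mu * l i) = a j * cos (mu * l j)) /\
  sumR m (fun i => a i * (mu * sin (mu * l i))) = 0.

Definition vindep (m d : nat) (a : nat -> nat -> R) : Prop :=
  forall c : nat -> R, (forall i, (i < m)%nat -> sumR d (fun j => c j * a j i) = 0) ->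
    forall j, (j < d)%nat -> c j = 0.

Lemma sol_char m l mu f : (forall i, (i < m)%nat -> 0 <= l i) -> eig_solution m l (mu ^ 2) f ->
  (forall i x, (i < m)%nat -> 0 <= x <= l i -> f i x = f i 0 * cos (mu * x) /\ Derive (f i) x = - f i 0 * mu * sin (mu * x))
  /\ solvec m l mu (fun i => f i 0).
Proof.
  intros Hl [H1 [H2 [H3 H4]]].
  assert (HC : forall i x, (i < m)%nat -> 0 <= x <= l i -> f i x = f i 0 * cos (mu * x) /\ Derive (f i) x = - f i 0 * mu * sin (mu * x)).
  { intros i x Hi Hx. destruct (edge_char (f i) mu (l i) (fun y Hy => H1 i y Hi Hy) (H2 i Hi) (Hl i Hi) x Hx). split; auto. }
  split; auto. split.
  - intros i j Hi Hj. rewrite <- (proj1 (HC i (l i) Hi ltac:(specialize (Hl i Hi); lra))).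
    rewrite <- (proj1 (HC j (l j) Hj ltac:(specialize (Hl j Hj); lra))). auto.
  - transitivity (sumR m (fun i => - Derive (f i) (l i))); [|exact H4]. apply sumR_ext. intros i Hi. rewrite (proj2 (HC i (l i) Hi ltac:(specialize (Hl i Hi); lra))). ring.
Qed.

Lemma derive_acos a mu y : Derive (fun x => a * cos (mu * x)) y = - a * mu * sin (mu * y).
Proof. apply is_derive_unique. auto_derive; auto. ring. Qed.

Lemma sol_of_vec m l mu a : solvec m l mu a -> eig_solution m l (mu ^ 2) (fun i x => a i * cos (mu * x)).
Proof.
  intros [C1 C2]. split; [|split; [|split]].
  - intros i x Hi Hx. split; [|split].
    + auto_derive; auto.
    +
      eapply ex_derive_ext; [intros t; symmetry; apply derive_acos|]. auto_derive; auto.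
    + simpl. rewrite (Derive_ext (fun x0 => Derive (fun x1 => a i * cos (mu * x1)) x0) (fun y => - a i * mu * sin (mu * y))) by (intros; apply derive_acos).
      rewrite (is_derive_unique _ x (- a i * mu * (mu * cos (mu * x)))). ring. auto_derive; auto; ring.
  - intros i Hi. rewrite derive_acos, Rmult_0_r, sin_0. ring.
  - intros i j Hi Hj. apply C1; auto.
  - rewrite <- C2. apply sumR_ext. intros i Hi. rewrite derive_acos. ring.
Qed.

Lemma mult_lemma m l mu d (a : nat -> nat -> R) (idx : nat -> nat) (M : nat -> nat -> R) :
  (forall i, (i < m)%nat -> 0 <= l i) ->
  (forall j, (j < d)%nat -> solvec m l mu (a j)) -> vindep m d a ->
  (forall b, solvec m l mu b -> forall i, (i < m)%nat -> b i = sumR d (fun t => M i t * b (idx t))) ->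
  multiplicity m l (mu ^ 2) d.
Proof.
  intros Hl Ha Hind Hrep. split.
  - exists (fun j i x => a j i * cos (mu * x)). split.
    + intros j Hj. apply sol_of_vec; auto.
    + intros c Hc j Hj. apply Hind; auto. intros i Hi. rewrite <- (Hc i 0 Hi).
      apply sumR_ext. intros; rewrite Rmult_0_r, cos_0; ring.
      specialize (Hl i Hi). lra.
  - intros [g [Hg Hgi]].
    assert (Hs : forall j, (j < S d)%nat -> solvec m l mu (fun i => g j i 0)) by (intros j Hj; apply (sol_char m l mu (g j) Hl (Hg j Hj))).
    destruct (steinitz d (S d) ltac:(lia) (fun j t => g j (idx t) 0)) as [c [[j0 [Hj0 Hc0]] Hc]].
    apply Hc0. apply Hgi; auto. intros i x Hi Hx.
    rewrite (sumR_ext _ _ (fun j => cos (mu * x) * (c j * g j i 0))).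
    2:{ intros j Hj. rewrite (proj1 (proj1 (sol_char m l mu (g j) Hl (Hg j Hj)) i x Hi Hx)). ring. }
    rewrite sumR_scal.
    rewrite (sumR_ext _ _ (fun j => sumR d (fun t => c j * (M i t * g j (idx t) 0)))).
    2:{ intros j Hj. rewrite (Hrep _ (Hs j Hj) i Hi). rewrite <- sumR_scal. reflexivity. }
    rewrite sumR_swap. rewrite sumR_zero. ring.
    intros t Ht. rewrite (sumR_ext _ _ (fun j => M i t * (c j * g j (idx t) 0))) by (intros; ring).
    rewrite sumR_scal, Hc by auto. ring.
Qed.

Lemma mult_eig m l lam d : multiplicity m l lam d -> (is_eigenvalue m l lam <-> (1 <= d)%nat).
Proof.
  intros [[g [Hg Hi]] Hn]. split.
  - intros [f [Hf [i [x [Hi' [Hx Hfx]]]]]]. destruct d; [|lia]. exfalso. apply Hn.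
    exists (fun _ => f). split. intros; auto.
    intros c Hc j Hj. assert (j = 0)%nat by lia. subst. specialize (Hc i x Hi' Hx).
    unfold sumR in Hc. simpl in Hc. rewrite Rplus_0_r in Hc. apply Rmult_integral in Hc. destruct Hc as [Hc|Hc]; [auto|]. 
    exfalso. apply Hfx. lra.
  - intros Hd. exists (g 0%nat). split. apply Hg; lia.
    destruct (classic (nonzero_on m l (g 0%nat))) as [Hnz|Hz]; auto. exfalso.
    assert (H1 : (fun j : nat => if Nat.eq_dec j 0 then 1 else 0) 0%nat = 0).
    { apply (Hi (fun j : nat => if Nat.eq_dec j 0 then 1 else 0)); [|lia]. intros i x Hi' Hx. 
      rewrite (sumR_ext _ _ (fun j => if Nat.eq_dec j 0 then g j i x else 0)).
      rewrite sumR_delta by lia. destruct (Req_dec (g 0%nat i x) 0); auto. exfalso; apply Hz. exists i, x; auto.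
      intros j Hj. destruct (Nat.eq_dec j 0); ring. }
    simpl in H1. lra.
Qed.


Lemma sumR_1 g : sumR 1 g = g 0%nat.
Proof. unfold sumR; simpl; ring. Qed.

Lemma mult_regular_1 m l mu : (0 < m)%nat -> (forall i, (i < m)%nat -> 0 <= l i) ->
  (forall i, (i < m)%nat -> cos (mu * l i) <> 0) ->
  sumR m (fun i => tan (mu * l i)) = 0 -> multiplicity m l (mu ^ 2) 1.
Proof.
  intros Hm Hl Hc HT.
  apply (mult_lemma m l mu 1 (fun _ i => 1 / cos (mu * l i)) (fun _ => 0%nat) (fun i _ => cos (mu * l 0%nat) / cos (mu * l i)) Hl).
  - intros j Hj. split.
    + intros i k Hi Hk. field. split; auto.
    + rewrite <- (Rmult_0_r mu), <- HT, <- sumR_scal. apply sumR_ext. intros i Hi. unfold tan. field. auto.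
  - intros c Hc0 j Hj. assert (j = 0)%nat by lia. subst. specialize (Hc0 0%nat Hm). rewrite sumR_1 in Hc0.
    apply Rmult_integral in Hc0. destruct Hc0 as [H|H]; auto. exfalso. unfold Rdiv in H. rewrite Rmult_1_l in H.
    apply (Rinv_neq_0_compat (cos (mu * l 0%nat))); auto.
  - intros b [C1 C2] i Hi. rewrite sumR_1. apply (Rmult_eq_reg_r (cos (mu * l i))); [|auto]. rewrite <- (C1 0%nat i Hm Hi). field. auto.
Qed.

Lemma mult_regular_0 m l mu : (0 < m)%nat -> (forall i, (i < m)%nat -> 0 <= l i) ->
  (forall i, (i < m)%nat -> cos (mu * l i) <> 0) -> mu <> 0 ->
  sumR m (fun i => tan (mu * l i)) <> 0 -> multiplicity m l (mu ^ 2) 0.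
Proof.
  intros Hm Hl Hc Hmu HT.
  apply (mult_lemma m l mu 0 (fun _ _ => 0) (fun _ => 0%nat) (fun _ _ => 0) Hl).
  - intros; lia.
  - intros c _ j Hj; lia.
  - intros b [C1 C2] i Hi. rewrite sumR_0.
    set (c0 := b 0%nat * cos (mu * l 0%nat)).
    assert (Hb : forall i, (i < m)%nat -> b i = c0 / cos (mu * l i)).
    { intros k Hk. unfold c0. rewrite <- (C1 k 0%nat Hk Hm). field. auto. }
    assert (c0 * mu * sumR m (fun i => tan (mu * l i)) = 0).
    { rewrite <- C2, <- sumR_scal. apply sumR_ext. intros k Hk. rewrite Hb by auto. unfold tan. field. auto. }
    apply Rmult_integral in H. destruct H as [H|H]; [|tauto]. apply Rmult_integral in H. destruct H as [H|H]; [|tauto].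
    rewrite Hb by auto. rewrite H. unfold Rdiv. ring.
Qed.

Definition sumL (h : nat -> R) (s : list nat) : R := fold_right Rplus 0 (map h s).

Lemma sumL_filter h P s : sumL h (filter P s) = sumL (fun i => if P i then h i else 0) s.
Proof. induction s; [reflexivity|]. simpl filter. destruct (P a) eqn:E; unfold sumL in *; simpl; rewrite IHs; rewrite E; ring. Qed.

Lemma sumR_shift n g : sumR (S n) g = g 0%nat + sumR n (fun t => g (S t)).
Proof. unfold sumR. simpl. f_equal. rewrite <- seq_shift, map_map. reflexivity. Qed.

Lemma sumR_nth h js : sumR (length js) (fun t => h (nth t js 0%nat)) = sumL h js.
Proof. induction js; simpl. reflexivity. rewrite sumR_shift. simpl. rewrite IHjs. reflexivity. Qed.

Definition pb (mu : R) (l : nat -> R) (i : nat) : bool := if Req_dec_T (mu * l i) (PI / 2) then true else false.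

Lemma mult_pole m l mu j0 js : (forall i, (i < m)%nat -> 0 <= l i) ->
  (forall i, (i < m)%nat -> mu * l i <> PI / 2 -> cos (mu * l i) <> 0) ->
  filter (pb mu l) (seq 0 m) = j0 :: js -> multiplicity m l (mu ^ 2) (length js).
Proof.
  intros Hl Hc HJ.
  assert (HIn : forall i, In i (j0 :: js) <-> (i < m)%nat /\ mu * l i = PI / 2).
  { intros i. rewrite <- HJ, filter_In, in_seq. unfold pb. destruct (Req_dec_T (mu * l i) (PI/2)); split; intros; intuition; try lia; try discriminate. }
  assert (HND : NoDup (j0 :: js)). { rewrite <- HJ. apply NoDup_filter, seq_NoDup. }
  assert (Hj0 : (j0 < m)%nat /\ mu * l j0 = PI / 2) by (apply HIn; left; auto).
  assert (Hjs : forall t, (t < length js)%nat -> (nth t js 0%nat < m)%nat /\ mu * l (nth t js 0%nat) = PI / 2 /\ nth t js 0%nat <> j0).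
  { intros t Ht. assert (In (nth t js 0%nat) js) by (apply nth_In; auto).
    assert (In (nth t js 0%nat) (j0::js)) by (right; auto). apply HIn in H0. split; [tauto|split; [tauto|]].
    intros E. inversion HND. rewrite E in H. auto. }
  assert (Hinj : forall t s, (t < length js)%nat -> (s < length js)%nat -> nth t js 0%nat = nth s js 0%nat -> t = s).
  { intros t s Ht Hs E. inversion HND. eapply NoDup_nth; eauto. }
  assert (Hcos0 : forall i, (i < m)%nat -> mu * l i = PI / 2 -> cos (mu * l i) = 0) by (intros i _ E; rewrite E; apply cos_PI2).
  assert (Hsin1 : forall i, (i < m)%nat -> mu * l i = PI / 2 -> sin (mu * l i) = 1) by (intros i _ E; rewrite E; apply sin_PI2).
  apply (mult_lemma m l mu (length js)
    (fun t i => (if Nat.eq_dec i (nth t js 0%nat) then 1 else 0) - (if Nat.eq_dec i j0 then 1 else 0))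
    (fun t => nth t js 0%nat)
    (fun i t => if Nat.eq_dec i (nth t js 0%nat) then 1 else if Nat.eq_dec i j0 then -1 else 0) Hl).
  - intros t Ht. destruct (Hjs t Ht) as [Hm1 [Hp1 Hne]]. split.
    + assert (Z : forall i, (i < m)%nat -> ((if Nat.eq_dec i (nth t js 0%nat) then 1 else 0) - (if Nat.eq_dec i j0 then 1 else 0)) * cos (mu * l i) = 0).
      { intros i Hi. destruct (Req_dec_T (mu * l i) (PI/2)) as [E|E].
        - rewrite Hcos0 by auto. ring.
        - destruct (Nat.eq_dec i (nth t js 0%nat)); [subst; tauto|]. destruct (Nat.eq_dec i j0); [subst; tauto|]. ring. }
      intros i k Hi Hk. rewrite Z, Z; auto.
    + rewrite (sumR_ext _ _ (fun i => (if Nat.eq_dec i (nth t js 0%nat) then mu * sin (mu * l i) else 0) + - (if Nat.eq_dec i j0 then mu * sin (mu * l i) else 0))).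
      rewrite sumR_plus, sumR_opp, !sumR_delta by tauto. rewrite !Hsin1 by tauto. ring.
      intros i Hi. destruct (Nat.eq_dec i (nth t js 0%nat)); destruct (Nat.eq_dec i j0); ring.
  - intros c Hc0 s Hs. destruct (Hjs s Hs) as [Hm1 [Hp1 Hne]]. specialize (Hc0 _ Hm1).
    match type of Hc0 with ?S = 0 => transitivity S; [|exact Hc0] end. symmetry.
    rewrite (sumR_ext _ _ (fun t => if Nat.eq_dec t s then c s else 0)). apply (sumR_delta _ s (fun _ => c s)); auto.
    intros t Ht. destruct (Nat.eq_dec (nth s js 0%nat) j0); [tauto|].
    destruct (Nat.eq_dec t s). subst. destruct (Nat.eq_dec (nth s js 0%nat) (nth s js 0%nat)); [ring|tauto].
    destruct (Nat.eq_dec (nth s js 0%nat) (nth t js 0%nat)). exfalso; apply n0; symmetry; apply Hinj; auto. ring.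
  - intros b [C1 C2] i Hi.
    assert (Hoff : forall k, (k < m)%nat -> mu * l k <> PI / 2 -> b k = 0).
    { intros k Hk Hn. pose proof (C1 k j0 Hk (proj1 Hj0)). rewrite (Hcos0 j0) in H by tauto.
      rewrite Rmult_0_r in H. apply Rmult_integral in H. destruct H; auto. exfalso; apply (Hc k); auto. }
    assert (Hmu : mu <> 0). { intros E. destruct Hj0 as [_ E2]. rewrite E, Rmult_0_l in E2. pose proof PI_RGT_0. lra. }
    assert (Hsum : b j0 + sumL b js = 0).
    { assert (mu * sumL b (j0 :: js) = 0).
      { rewrite <- C2. rewrite <- HJ, sumL_filter.
        change (sumL ?g (seq 0 m)) with (sumR m g). rewrite <- sumR_scal. apply sumR_ext. intros k Hk.
        unfold pb. destruct (Req_dec_T (mu * l k) (PI/2)). rewrite Hsin1 by (auto; lia). ring. rewrite Hoff by (auto; lia). ring. }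
      apply Rmult_integral in H. destruct H; [tauto|]. exact H. }
    destruct (Req_dec_T (mu * l i) (PI/2)) as [E|E].
    + assert (In i (j0 :: js)) by (apply HIn; auto). destruct H as [H|H].
      * subst i. rewrite (sumR_ext _ _ (fun t => -1 * b (nth t js 0%nat))). rewrite sumR_scal, sumR_nth. lra.
        intros t Ht. destruct (Hjs t Ht) as [_ [_ Hne]]. destruct (Nat.eq_dec j0 (nth t js 0%nat)). subst; tauto.
        destruct (Nat.eq_dec j0 j0); [ring|tauto].
      * destruct (In_nth js i 0%nat H) as [s [Hs Hns]]. subst i.
        rewrite (sumR_ext _ _ (fun t => if Nat.eq_dec t s then b (nth s js 0%nat) else 0)). rewrite sumR_delta; auto.
        intros t Ht. destruct (Nat.eq_dec t s). subst. destruct (Nat.eq_dec (nth s js 0%nat) (nth s js 0%nat)); [ring|tauto].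
        destruct (Nat.eq_dec (nth s js 0%nat) (nth t js 0%nat)). exfalso; apply n; symmetry; apply Hinj; auto.
        destruct (Hjs s Hs) as [_ [_ Hne]]. destruct (Nat.eq_dec (nth s js 0%nat) j0); [tauto|ring].
    + rewrite Hoff by auto. symmetry. apply sumR_zero. intros t Ht. destruct (Hjs t Ht) as [_ [Hp _]].
      destruct (Nat.eq_dec i (nth t js 0%nat)). subst; tauto. destruct (Nat.eq_dec i j0). subst; tauto. ring.
Qed.


Lemma tan_mono x y : 0 <= x -> x < y -> y < PI -> ~ (x <= PI / 2 <= y) -> tan x < tan y.
Proof.
  intros H0 Hxy Hy Hn. pose proof PI_RGT_0.
  destruct (Rlt_dec y (PI/2)).
  - apply tan_increasing; lra.
  - assert (PI / 2 < x) by lra.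
    assert (tan (PI - y) < tan (PI - x)) by (apply tan_increasing; lra).
    unfold tan in *. rewrite !sin_PI_x, !Rtrigo_facts.cos_pi_minus in H2.
    unfold Rdiv in *. rewrite !Rinv_opp in H2. lra.
Qed.

Lemma cos_nz x : 0 <= x < PI -> x <> PI / 2 -> cos x <> 0.
Proof. intros H Hn E. apply Hn. apply cos_inj; try lra. rewrite E, cos_PI2; auto. Qed.

Definition Fs (m : nat) (l : nat -> R) (mu : R) := sumR m (fun i => tan (mu * l i)).

Lemma F_mono m l k mu1 mu2 : (0 < m)%nat -> (forall i, (i < m)%nat -> 0 < l i) -> (forall i, (i < m)%nat -> k * l i < PI) ->
  0 <= mu1 -> mu1 < mu2 -> mu2 <= k ->
  (forall i mu, (i < m)%nat -> mu1 <= mu <= mu2 -> mu * l i <> PI / 2) -> Fs m l mu1 < Fs m l mu2.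
Proof.
  intros Hm Hl Hk H1 H12 H2 Hnp. apply sumR_lt; auto. intros i Hi.
  specialize (Hl i Hi). specialize (Hk i Hi).
  apply tan_mono. nra. nra. nra.
  intros [A B]. apply (Hnp i (PI / 2 / l i) Hi).
  split. apply (Rmult_le_reg_r (l i)); auto. field_simplify; lra.
  apply (Rmult_le_reg_r (l i)); auto. field_simplify; lra. field. lra.
Qed.

Lemma tanl_cont mu c : cos (mu * c) <> 0 -> continuity_pt (fun y => tan (y * c)) mu.
Proof. intros H. apply continuity_pt_filterlim. apply (ex_derive_continuous (fun y => tan (y * c))). unfold tan. auto_derive. auto. Qed.

Lemma sumR_cont m (g : nat -> R -> R) x : (forall i, (i < m)%nat -> continuity_pt (g i) x) ->
  continuity_pt (fun y => sumR m (fun i => g i y)) x.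
Proof.
  induction m; intros H.
  - apply (continuity_pt_ext (fun _ => 0)). intros; reflexivity. apply continuity_pt_const. intros a b; auto.
  - apply (continuity_pt_ext (fun y => sumR m (fun i => g i y) + g m y)). intros; rewrite sumR_S; auto.
    apply (continuity_pt_plus (fun y => sumR m (fun i => g i y)) (g m)). apply IHm. intros; apply H; lia. apply H; lia.
Qed.

Lemma F_cont m l mu : (forall i, (i < m)%nat -> cos (mu * l i) <> 0) -> continuity_pt (Fs m l) mu.
Proof. intros H. unfold Fs. apply (sumR_cont m (fun i y => tan (y * l i))). intros i Hi. apply tanl_cont; auto. Qed.

Lemma cont_eps f x : continuity_pt f x -> forall eps, 0 < eps -> exists d, 0 < d /\ forall y, Rabs (y - x) < d -> Rabs (f y - f x) < eps.
Proof.
  intros H eps He. destruct (H eps He) as [d [Hd Hy]]. exists d. split; auto. intros y Hyx.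
  destruct (Req_dec y x). subst. rewrite Rminus_diag, Rabs_R0. auto.
  apply Hy. split. split; [exact I|auto]. auto.
Qed.

Lemma tan_near_left M : 0 < M -> exists d, 0 < d /\ forall y, 0 < y < d -> M < tan (PI / 2 - y).
Proof.
  intros HM. exists (Rmin (PI / 3) (1 / (2 * M))). split.
  apply Rmin_glb_lt. pose proof PI_RGT_0; lra. apply Rdiv_lt_0_compat; lra.
  intros y [Hy0 Hy]. assert (Hy1 : y < PI/3) by (eapply Rlt_le_trans; [exact Hy|apply Rmin_l]).
  assert (Hy2 : y < 1/(2*M)) by (eapply Rlt_le_trans; [exact Hy|apply Rmin_r]).
  unfold tan. rewrite sin_shift, cos_shift. pose proof PI_RGT_0.
  assert (Hc : 1/2 <= cos y) by (rewrite <- cos_PI3; apply cos_decr_1; lra).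
  assert (Hs : 0 < sin y) by (apply sin_gt_0; lra). assert (sin y < y) by (apply sin_lt_x; auto).
  apply (Rmult_lt_reg_r (sin y)); auto. unfold Rdiv. rewrite Rmult_assoc, Rinv_l by lra.
  assert (M * y < 1/2). { apply (Rmult_lt_reg_r (/ M)). apply Rinv_0_lt_compat; auto.
    replace (M * y * / M) with y by (field; lra). replace (1/2 * / M) with (1/(2*M)) by (field; lra). auto. }
  nra.
Qed.

Lemma tan_near_right M : 0 < M -> exists d, 0 < d /\ forall y, 0 < y < d -> tan (PI / 2 + y) < - M.
Proof.
  intros HM. destruct (tan_near_left M HM) as [d [Hd H]]. exists d. split; auto. intros y Hy.
  specialize (H y Hy). unfold tan in *. rewrite sin_shift, cos_shift in H.
  rewrite <- cos_sin. replace (cos (PI / 2 + y)) with (- sin y) by (rewrite sin_cos; ring).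
  unfold Rdiv in *. rewrite Rinv_opp. lra.
Qed.


Lemma tan_neg x : PI / 2 < x < PI -> tan x < 0.
Proof. intros H. unfold tan. pose proof PI_RGT_0. assert (0 < sin x) by (apply sin_gt_0; lra).
  assert (cos x < 0) by (apply cos_lt_0; lra). unfold Rdiv. assert (/ cos x < 0) by (apply Rinv_lt_0_compat; auto). nra. Qed.

Lemma F_limit m l k nu j : (0 < m)%nat -> (forall i, (i < m)%nat -> 0 < l i) -> (forall i, (i < m)%nat -> k * l i < PI) ->
  0 < nu < k -> (j < m)%nat -> nu * l j = PI / 2 ->
  exists d, 0 < d /\ (forall mu, nu - d < mu < nu -> 0 < Fs m l mu) /\ (forall mu, nu < mu < nu + d -> Fs m l mu < 0).
Proof.
  intros Hm Hl Hk Hnu Hj Hpj. pose proof PI_RGT_0.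
  set (B := fun mu => sumR m (fun i => if pb nu l i then 0 else tan (mu * l i))).
  set (A := fun mu => sumR m (fun i => if pb nu l i then tan (mu * l i) else 0)).
  assert (HF : forall mu, Fs m l mu = A mu + B mu).
  { intros mu. unfold A, B, Fs. rewrite <- sumR_plus. apply sumR_ext. intros i Hi. destruct (pb nu l i); ring. }
  assert (HBc : continuity_pt B nu).
  { unfold B. apply (sumR_cont m (fun i y => if pb nu l i then 0 else tan (y * l i))). intros i Hi.
    unfold pb. destruct (Req_dec_T (nu * l i) (PI/2)).
    - apply continuity_pt_const. intros a b; auto.
    - apply tanl_cont. apply cos_nz; auto. specialize (Hl i Hi). specialize (Hk i Hi). split; nra. }
  destruct (cont_eps B nu HBc 1 ltac:(lra)) as [d1 [Hd1 HB1]].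
  set (M := Rabs (B nu) + 1).
  assert (HM : 0 < M) by (unfold M; pose proof (Rabs_pos (B nu)); lra).
  destruct (tan_near_left M HM) as [d2 [Hd2 HL2]].
  destruct (tan_near_right M HM) as [d3 [Hd3 HR3]].
  assert (Hlj := Hl j Hj).
  set (d := Rmin d1 (Rmin (d2 / l j) (Rmin (d3 / l j) (nu)))).
  assert (Hdpos : 0 < d). { unfold d. repeat apply Rmin_glb_lt; try lra; apply Rdiv_lt_0_compat; lra. }
  assert (Hdd1 : d <= d1) by (unfold d; apply Rmin_l).
  assert (Hdd2 : d <= d2 / l j) by (unfold d; eapply Rle_trans; [apply Rmin_r|apply Rmin_l]).
  assert (Hdd3 : d <= d3 / l j) by (unfold d; eapply Rle_trans; [apply Rmin_r|]; eapply Rle_trans; [apply Rmin_r|apply Rmin_l]).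
  assert (Hdd4 : d <= nu) by (unfold d; eapply Rle_trans; [apply Rmin_r|]; eapply Rle_trans; [apply Rmin_r|apply Rmin_r]).
  assert (HBb : forall mu, Rabs (mu - nu) < d -> - M < B mu < M).
  { intros mu Hmu. assert (Rabs (B mu - B nu) < 1) by (apply HB1; lra).
    unfold M. pose proof (Rabs_def2 _ _ H0). pose proof (Rle_abs (B nu)). pose proof (Rabs_maj2 (B nu)). lra. }
  assert (Hpbj : pb nu l j = true) by (unfold pb; destruct (Req_dec_T (nu * l j) (PI/2)); auto).
  exists d. split; auto. split.
  - intros mu Hmu. rewrite HF.
    assert (Htj : M < tan (mu * l j)).
    { replace (mu * l j) with (PI / 2 - (nu - mu) * l j) by (rewrite <- Hpj; ring). apply HL2. split. nra.
      apply (Rmult_lt_reg_r (/ l j)). apply Rinv_0_lt_compat; auto. replace ((nu - mu) * l j * / l j) with (nu - mu) by (field; lra).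
      unfold Rdiv in Hdd2. lra. }
    assert (tan (mu * l j) <= A mu).
    { unfold A. assert (Hge := sumR_ge_term m (fun i => if pb nu l i then tan (mu * l i) else 0) j).
      simpl in Hge. rewrite Hpbj in Hge. apply Hge; auto.
      intros i Hi. unfold pb. destruct (Req_dec_T (nu * l i) (PI/2)); [|lra]. left. specialize (Hl i Hi). apply tan_gt_0; nra. }
    assert (- M < B mu) by (apply HBb; rewrite Rabs_left by lra; lra). lra.
  - intros mu Hmu. rewrite HF.
    assert (Htj : tan (mu * l j) < - M).
    { replace (mu * l j) with (PI / 2 + (mu - nu) * l j) by (rewrite <- Hpj; ring). apply HR3. split. nra.
      apply (Rmult_lt_reg_r (/ l j)). apply Rinv_0_lt_compat; auto. replace ((mu - nu) * l j * / l j) with (mu - nu) by (field; lra).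
      unfold Rdiv in Hdd3. lra. }
    assert (A mu <= tan (mu * l j)).
    { unfold A. assert (Hge := sumR_le_term m (fun i => if pb nu l i then tan (mu * l i) else 0) j).
      simpl in Hge. rewrite Hpbj in Hge. apply Hge; auto.
      intros i Hi. unfold pb. destruct (Req_dec_T (nu * l i) (PI/2)); [|lra]. left. specialize (Hl i Hi). apply tan_neg; nra. }
    assert (B mu < M) by (apply HBb; rewrite Rabs_right by lra; lra). lra.
Qed.

Lemma isolation (g : nat -> R) x m : exists e, 0 < e /\ forall i, (i < m)%nat -> g i <> x -> e <= Rabs (g i - x).
Proof.
  induction m.
  - exists 1. split. lra. intros; lia.
  - destruct IHm as [e [He H]]. destruct (Req_dec (g m) x).
    + exists e. split; auto. intros i Hi Hn. destruct (Nat.eq_dec i m). subst; tauto. apply H; auto; lia.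
    + exists (Rmin e (Rabs (g m - x))). split. apply Rmin_glb_lt; auto. apply Rabs_pos_lt. lra.
      intros i Hi Hn. destruct (Nat.eq_dec i m). subst. apply Rmin_r. eapply Rle_trans; [apply Rmin_l|]. apply H; auto; lia.
Qed.

Lemma max_exists (g : nat -> R) (P : nat -> Prop) m : (exists i, (i < m)%nat /\ P i) ->
  exists i, (i < m)%nat /\ P i /\ forall j, (j < m)%nat -> P j -> g j <= g i.
Proof.
  induction m; intros [i [Hi Pi]]; [lia|].
  destruct (classic (exists i, (i < m)%nat /\ P i)) as [Hex|Hno].
  - destruct (IHm Hex) as [i0 [Hi0 [P0 Hmax]]].
    destruct (classic (P m)) as [Pm|Pm].
    + destruct (Rle_dec (g m) (g i0)).
      * exists i0. split; [lia|split; auto]. intros j Hj Pj. destruct (Nat.eq_dec j m). subst; auto. apply Hmax; auto; lia.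
      * exists m. split; [lia|split; auto]. intros j Hj Pj. destruct (Nat.eq_dec j m). subst; lra. assert (g j <= g i0) by (apply Hmax; auto; lia). lra.
    + exists i0. split; [lia|split; auto]. intros j Hj Pj. destruct (Nat.eq_dec j m). subst; tauto. apply Hmax; auto; lia.
  - assert (i = m). { destruct (Nat.eq_dec i m); auto. exfalso. apply Hno. exists i. split; auto; lia. } subst.
    exists m. split; [lia|split; auto]. intros j Hj Pj. destruct (Nat.eq_dec j m). subst; lra. exfalso. apply Hno. exists j. split; auto; lia.
Qed.


Definition SPn (m : nat) (l : nat -> R) (a b : R) (n : nat) : Prop :=
  exists (lams : list R) (ds : list nat),
    NoDup lams /\
    (forall lam, In lam lams <-> (a <= lam < b /\ is_eigenvalue m l lam)) /\
    length ds = length lams /\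
    (forall j, (j < length lams)%nat -> multiplicity m l (nth j lams 0) (nth j ds 0%nat)) /\
    n = fold_right Nat.add 0%nat ds.

Lemma fold_add_app (d1 d2 : list nat) : fold_right Nat.add 0%nat (d1 ++ d2) = (fold_right Nat.add 0%nat d1 + fold_right Nat.add 0%nat d2)%nat.
Proof. induction d1; simpl; auto. rewrite IHd1. lia. Qed.

Lemma SPn_app m l a b c n1 n2 : a <= b -> b <= c -> SPn m l a b n1 -> SPn m l b c n2 -> SPn m l a c (n1 + n2).
Proof.
  intros Hab Hbc [L1 [D1 [N1 [I1 [E1 [M1 S1]]]]]] [L2 [D2 [N2 [I2 [E2 [M2 S2]]]]]].
  exists (L1 ++ L2), (D1 ++ D2). split; [|split; [|split; [|split]]].
  - apply NoDup_app; auto. intros x H1 H2. apply I1 in H1. apply I2 in H2. lra.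
  - intros x. rewrite in_app_iff, I1, I2. split.
    + intros [[H H']|[H H']]; split; auto; lra.
    + intros [H H']. destruct (Rlt_dec x b); [left|right]; split; auto; lra.
  - rewrite !length_app. lia.
  - intros j Hj. rewrite length_app in Hj. destruct (Nat.lt_ge_cases j (length L1)).
    + rewrite app_nth1, app_nth1 by lia. auto.
    + rewrite app_nth2, app_nth2 by lia. rewrite E1. apply M2. lia.
  - rewrite fold_add_app. lia.
Qed.

Lemma SPn_empty m l a b : (forall x, a <= x < b -> ~ is_eigenvalue m l x) -> SPn m l a b 0.
Proof.
  intros H. exists nil, nil. split; [constructor|split; [|split; [auto|split; [intros; simpl in *; lia|auto]]]].
  intros x. simpl. split; [tauto|]. intros [H1 H2]. apply (H x); auto.
Qed.

Lemma SPn_point m l a b x0 d : multiplicity m l x0 d -> a <= x0 < b ->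
  (forall x, a <= x < b -> x <> x0 -> ~ is_eigenvalue m l x) -> SPn m l a b d.
Proof.
  intros Hm Hx H. pose proof (mult_eig _ _ _ _ Hm) as He. destruct d.
  - apply SPn_empty. intros x Hx' Hex. destruct (Req_dec x x0). subst. apply He in Hex. lia. apply (H x); auto.
  - exists (x0 :: nil), (S d :: nil). split; [repeat constructor; simpl; tauto|split; [|split; [auto|split]]].
    + intros x. simpl. split.
      * intros [E|[]]. subst. split; auto. apply He. lia.
      * intros [H1 H2]. left. destruct (Req_dec x x0); auto. exfalso; apply (H x); auto.
    + intros j Hj. simpl in Hj. assert (j = 0)%nat by lia. subst. simpl. auto.
    + simpl. lia.
Qed.

Lemma sq_int a b x : 0 <= a -> a <= b -> a ^ 2 <= x < b ^ 2 -> 0 <= sqrt x /\ a <= sqrt x < b /\ sqrt x ^ 2 = x.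
Proof.
  intros Ha Hab [H1 H2]. assert (Hx : 0 <= x) by nra. pose proof (sqrt_pos x). pose proof (pow2_sqrt x Hx).
  split; auto. split; auto. split.
  - destruct (Rle_dec a (sqrt x)); auto. exfalso.
    assert (sqrt x * sqrt x < a * a) by (apply Rmult_le_0_lt_compat; lra). simpl in *. lra.
  - destruct (Rlt_dec (sqrt x) b); auto. assert (b <= sqrt x) by lra. exfalso.
    assert (b * b <= sqrt x * sqrt x) by (apply Rmult_le_compat; lra). simpl in *. lra.
Qed.

Lemma SPn_empty_mu m l a b : 0 <= a -> a <= b -> (forall mu, a <= mu < b -> ~ is_eigenvalue m l (mu ^ 2)) -> SPn m l (a ^ 2) (b ^ 2) 0.
Proof.
  intros Ha Hb H. apply SPn_empty. intros x Hx. destruct (sq_int a b x Ha Hb Hx) as [H0 [H1 H2]].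
  rewrite <- H2. apply H; auto.
Qed.

Lemma SPn_point_mu m l a b mu0 d : 0 <= a -> a <= mu0 < b -> multiplicity m l (mu0 ^ 2) d ->
  (forall mu, a <= mu < b -> mu <> mu0 -> ~ is_eigenvalue m l (mu ^ 2)) -> SPn m l (a ^ 2) (b ^ 2) d.
Proof.
  intros Ha Hmu Hm H. apply (SPn_point m l _ _ (mu0 ^ 2) d Hm).
  - split; [apply pow_incr; lra|]. destruct (Rlt_dec (mu0 ^ 2) (b ^ 2)); auto. exfalso. nra.
  - intros x Hx Hn. destruct (sq_int a b x Ha ltac:(lra) Hx) as [H0 [H1 H2]]. rewrite <- H2. apply H; auto.
    intros E. apply Hn. rewrite <- H2, E. auto.
Qed.


Definition good (m : nat) (l : nat -> R) (k : R) : Prop :=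
  (0 < m)%nat /\ (forall i, (i < m)%nat -> 0 < l i) /\ (forall i, (i < m)%nat -> k * l i < PI) /\ 0 < k.

Definition qc (m : nat) (l : nat -> R) (t : R) : nat :=
  length (filter (fun i => if Rlt_dec (PI / 2) (t * l i) then true else false) (seq 0 m)).

Definition nonpole (m : nat) (l : nat -> R) (mu : R) : Prop := forall i, (i < m)%nat -> mu * l i <> PI / 2.

Lemma cos_nonpole m l k mu : good m l k -> 0 <= mu <= k -> nonpole m l mu -> forall i, (i < m)%nat -> cos (mu * l i) <> 0.
Proof. intros [Hm [Hl [Hk Hk0]]] Hmu Hnp i Hi. apply cos_nz; [|apply Hnp; auto]. specialize (Hl i Hi). specialize (Hk i Hi). split; nra. Qed.

Lemma not_eig_reg m l k mu : good m l k -> 0 < mu <= k -> nonpole m l mu -> Fs m l mu <> 0 -> ~ is_eigenvalue m l (mu ^ 2).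
Proof.
  intros G Hmu Hnp HF Hev. destruct G as [Hm [Hl [Hk Hk0]]] eqn:EG.
  assert (Hmult : multiplicity m l (mu ^ 2) 0).
  { apply mult_regular_0; auto. intros i Hi; left; auto. eapply cos_nonpole; eauto; lra. lra. }
  apply (mult_eig _ _ _ _ Hmult) in Hev. lia.
Qed.

Lemma mult_reg1 m l k mu : good m l k -> 0 <= mu <= k -> nonpole m l mu -> Fs m l mu = 0 -> multiplicity m l (mu ^ 2) 1.
Proof.
  intros G Hmu Hnp HF. destruct G as [Hm [Hl [Hk Hk0]]] eqn:EG.
  apply mult_regular_1; auto. intros i Hi; left; auto. eapply cos_nonpole; eauto.
Qed.

Lemma mult_pole2 m l k nu j0 js : good m l k -> 0 < nu <= k -> filter (pb nu l) (seq 0 m) = j0 :: js -> multiplicity m l (nu ^ 2) (length js).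
Proof.
  intros [Hm [Hl [Hk Hk0]]] Hnu HJ. apply (mult_pole m l nu j0 js); auto. intros i Hi; left; auto.
  intros i Hi Hn. apply cos_nz; auto. specialize (Hl i Hi). specialize (Hk i Hi). split; nra.
Qed.

Lemma cnt_split m (P Q S : nat -> bool) :
  (forall i, (i < m)%nat -> (P i = true <-> Q i = true \/ S i = true) /\ ~ (Q i = true /\ S i = true)) ->
  length (filter P (seq 0 m)) = (length (filter Q (seq 0 m)) + length (filter S (seq 0 m)))%nat.
Proof.
  induction m; intros H; [reflexivity|].
  rewrite !seq_S, !filter_app, !length_app. rewrite IHm by (intros; apply H; lia).
  simpl. destruct (H m ltac:(lia)) as [H1 H2].
  destruct (P m), (Q m), (S m); simpl; try lia; intuition; try discriminate.
Qed.

Lemma filter_len_pos {A} (P : A -> bool) s x : In x s -> P x = true -> (0 < length (filter P s))%nat.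
Proof. intros Hin HP. assert (In x (filter P s)) by (apply filter_In; auto). destruct (filter P s); simpl in *; [tauto|lia]. Qed.

Lemma filter_len_zero m (P : nat -> bool) : (forall i, (i < m)%nat -> P i = false) -> length (filter P (seq 0 m)) = 0%nat.
Proof. intros H. induction m; [reflexivity|]. rewrite seq_S, filter_app, length_app, IHm by (intros; apply H; lia). simpl. rewrite H by lia. reflexivity. Qed.


Definition indpos (x : R) : nat := if Rlt_dec 0 x then 1%nat else 0%nat.

Lemma F_pos_mono m l k a mu : good m l k -> 0 <= a <= mu -> mu <= k ->
  (forall i x, (i < m)%nat -> a <= x <= mu -> x * l i <> PI / 2) -> Fs m l a <= Fs m l mu.
Proof. intros [Hm [Hl [Hk Hk0]]] Ha Hmu Hnp. destruct (Req_dec a mu). subst; lra. left. apply (F_mono m l k); auto; lra. Qed.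

Lemma claim_base m l k t : good m l k -> 0 < t < k -> nonpole m l t ->
  (forall i, (i < m)%nat -> ~ PI / 2 < t * l i) ->
  SPn m l 0 (t ^ 2) (qc m l t + indpos (Fs m l t)).
Proof.
  intros G Ht Hnp Hno. pose proof G as [Hm [Hl [Hk Hk0]]].
  assert (Hq : qc m l t = 0%nat). { apply filter_len_zero. intros i Hi. destruct (Rlt_dec (PI/2) (t * l i)); auto. exfalso; apply (Hno i); auto. }
  assert (Hpos : forall mu, 0 < mu <= t -> 0 < Fs m l mu).
  { intros mu Hmu. unfold Fs. rewrite <- (sumR_zero m (fun _ => 0)) by auto. apply sumR_lt; auto. intros i Hi.
    specialize (Hl i Hi). specialize (Hno i Hi). specialize (Hnp i Hi). apply tan_gt_0. nra.
    assert (t * l i < PI / 2) by lra. nra. }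
  assert (Hi : indpos (Fs m l t) = 1%nat). { unfold indpos. destruct (Rlt_dec 0 (Fs m l t)); auto. exfalso. apply n, Hpos; lra. }
  rewrite Hq, Hi. simpl.
  replace 0 with (0 ^ 2) at 1 by ring.
  apply (SPn_point_mu m l 0 t 0 1); try lra.
  - apply (mult_reg1 m l k); auto; try lra. intros i Hi' E. rewrite Rmult_0_l in E. pose proof PI_RGT_0; lra.
    unfold Fs. apply sumR_zero. intros i Hi'. rewrite Rmult_0_l. apply tan_0.
  - intros mu Hmu Hn. apply (not_eig_reg m l k); auto. lra.
    intros i Hi' E. specialize (Hl i Hi'). specialize (Hno i Hi'). specialize (Hnp i Hi'). assert (t * l i < PI/2) by lra. nra.
    assert (0 < Fs m l mu) by (apply Hpos; lra). lra.
Qed.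

Lemma claim_step m l k t : good m l k -> 0 < t < k -> nonpole m l t -> Fs m l t <> 0 ->
  (forall s, (qc m l s < qc m l t)%nat -> 0 < s < k -> nonpole m l s -> Fs m l s <> 0 -> SPn m l 0 (s ^ 2) (qc m l s + indpos (Fs m l s))) ->
  SPn m l 0 (t ^ 2) (qc m l t + indpos (Fs m l t)).
Proof.
  intros G Ht Hnp HFt IH. pose proof G as [Hm [Hl [Hk Hk0]]]. pose proof PI_RGT_0 as HPI.
  destruct (classic (exists i, (i < m)%nat /\ PI / 2 < t * l i)) as [Hex|Hno].
  2:{ apply (claim_base m l k); auto. intros i Hi H. apply Hno; eauto. }
  destruct (max_exists (fun i => PI / 2 / l i) (fun i => PI / 2 < t * l i) m Hex) as [is [His [Pis Hmax]]].
  set (nu := PI / 2 / l is).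
  assert (Hlis := Hl is His).
  assert (Hnul : nu * l is = PI / 2) by (unfold nu; field; lra).
  assert (Hnu0 : 0 < nu) by (unfold nu; apply Rdiv_lt_0_compat; lra).
  assert (Hnut : nu < t) by nra.
  assert (HNA : forall i mu, (i < m)%nat -> nu < mu <= t -> mu * l i <> PI / 2).
  { intros i mu Hi Hmu E. assert (Hli := Hl i Hi). assert (Emu : mu = PI / 2 / l i) by (rewrite <- E; field; lra).
    destruct (Req_dec mu t) as [Emt|Emt]. { rewrite Emt in E. exact (Hnp i Hi E). }
    assert (mu * l i < t * l i) by (apply Rmult_lt_compat_r; lra). assert (PI / 2 < t * l i) by lra. specialize (Hmax i Hi H0). simpl in Hmax. fold nu in Hmax. lra. }
  destruct (isolation (fun i => PI / 2 / l i) nu m) as [eps [Heps Hiso]].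
  assert (HIso : forall i mu, (i < m)%nat -> Rabs (mu - nu) < eps -> mu * l i = PI / 2 -> mu = nu).
  { intros i mu Hi Hmu E. assert (Hli := Hl i Hi). assert (Emu : mu = PI / 2 / l i) by (rewrite <- E; field; lra).
    destruct (Req_dec mu nu); auto. exfalso. specialize (Hiso i Hi). simpl in Hiso. rewrite <- Emu in Hiso. specialize (Hiso H). lra. }
  destruct (F_limit m l k nu is Hm Hl Hk ltac:(lra) His Hnul) as [dl [Hdl [HLl HLr]]].
  set (eta := Rmin eps (Rmin dl nu) / 2).
  assert (Hmin0 : 0 < Rmin eps (Rmin dl nu)) by (repeat apply Rmin_glb_lt; lra).
  assert (Heta0 : 0 < eta) by (unfold eta; lra).
  assert (Heta1 : eta < eps) by (unfold eta; pose proof (Rmin_l eps (Rmin dl nu)); lra).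
  assert (Heta2 : eta < dl) by (unfold eta; pose proof (Rmin_r eps (Rmin dl nu)); pose proof (Rmin_l dl nu); lra).
  assert (Heta3 : eta < nu) by (unfold eta; pose proof (Rmin_r eps (Rmin dl nu)); pose proof (Rmin_r dl nu); lra).
  set (s := nu - eta).
  assert (Hs : 0 < s < nu) by (unfold s; lra).
  assert (Hnps : forall i mu, (i < m)%nat -> s <= mu < nu -> mu * l i <> PI / 2).
  { intros i mu Hi Hmu E. assert (mu = nu) by (apply (HIso i); auto; rewrite Rabs_left by lra; unfold s in Hmu; lra). lra. }
  assert (HFs : 0 < Fs m l s) by (apply HLl; unfold s; lra).
  assert (Hcnt : qc m l t = (qc m l s + length (filter (pb nu l) (seq 0 m)))%nat).
  { unfold qc. apply cnt_split. intros i Hi. assert (Hli := Hl i Hi).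
    assert (Ha : nu * l i = PI / 2 -> PI / 2 < t * l i /\ ~ PI / 2 < s * l i).
    { intros E. split. assert (nu * l i < t * l i) by (apply Rmult_lt_compat_r; lra). lra.
      assert (s * l i < nu * l i) by (apply Rmult_lt_compat_r; lra). lra. }
    assert (Hb : nu * l i <> PI / 2 -> (PI / 2 < t * l i <-> PI / 2 < s * l i)).
    { intros Ne. split; intros H.
      - destruct (Rlt_dec (PI / 2) (s * l i)) as [H'|H']; auto. exfalso.
        assert (Emu : PI / 2 / l i * l i = PI / 2) by (field; lra).
        set (mu := PI / 2 / l i) in *.
        assert (s <= mu). { destruct (Rle_dec s mu); auto. assert (mu * l i < s * l i) by (apply Rmult_lt_compat_r; lra). lra. }
        assert (mu < t). { destruct (Rlt_dec mu t); auto. assert (t * l i <= mu * l i) by (apply Rmult_le_compat_r; lra). lra. }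
        destruct (Rlt_dec mu nu). apply (Hnps i mu Hi); auto; lra.
        destruct (Req_dec mu nu) as [E|E]. rewrite E in Emu. tauto.
        apply (HNA i mu Hi); auto; lra.
      - assert (s * l i < t * l i) by (apply Rmult_lt_compat_r; lra). lra. }
    unfold pb. destruct (Rlt_dec (PI/2) (t * l i)), (Rlt_dec (PI/2) (s * l i)), (Req_dec_T (nu * l i) (PI/2));
      split; try (split; intros; try discriminate; intuition; fail); try (intros [H1 H2]; discriminate);
      try (specialize (Ha e); tauto); try (specialize (Hb n1); tauto); try (specialize (Hb n0); tauto); try (specialize (Hb n); tauto).
    all: try (intros [H1 H2]; specialize (Ha e); tauto).
    all: try (split; intros [H1|H1]; try discriminate; specialize (Ha e); tauto).
  }
  assert (HJ : exists j0 js, filter (pb nu l) (seq 0 m) = j0 :: js).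
  { assert (In is (filter (pb nu l) (seq 0 m))). { apply filter_In. split. apply in_seq; lia. unfold pb. destruct (Req_dec_T (nu * l is) (PI/2)); auto. }
    destruct (filter (pb nu l) (seq 0 m)); [simpl in H; tauto|eauto]. }
  destruct HJ as [j0 [js HJ]]. rewrite HJ in Hcnt. simpl in Hcnt.
  assert (Hmultnu : multiplicity m l (nu ^ 2) (length js)) by (apply (mult_pole2 m l k nu j0 js); auto; lra).
  assert (HS1 : SPn m l 0 (s ^ 2) (qc m l s + 1)).
  { assert (indpos (Fs m l s) = 1%nat) by (unfold indpos; destruct (Rlt_dec 0 (Fs m l s)); auto; lra).
    replace (qc m l s + 1)%nat with (qc m l s + indpos (Fs m l s))%nat by (rewrite H; reflexivity). apply IH. lia. lra. intros i Hi. apply (Hnps i s Hi). lra. lra. }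
  assert (HS2 : SPn m l (s ^ 2) (nu ^ 2) 0).
  { apply SPn_empty_mu; try lra. intros mu Hmu. apply (not_eig_reg m l k); auto. lra.
    intros i Hi. apply Hnps; auto.
    assert (Fs m l s <= Fs m l mu). { apply (F_pos_mono m l k); auto; try lra. intros i x Hi Hx. apply Hnps; auto; lra. } lra. }
  assert (Hsq1 : 0 <= s ^ 2) by (apply pow_le; lra).
  assert (Hsq2 : s ^ 2 <= nu ^ 2) by (apply pow_incr; lra).
  assert (Hsq3 : nu ^ 2 <= t ^ 2) by (apply pow_incr; lra).
  pose proof (SPn_app _ _ _ _ _ _ _ Hsq1 Hsq2 HS1 HS2) as HS12.
  unfold indpos in *. destruct (Rlt_dec 0 (Fs m l t)) as [Hpos|Hneg].
  -
    set (r := nu + Rmin eta ((t - nu) / 2)).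
    assert (Hr : nu < r < t) by (unfold r; pose proof (Rmin_r eta ((t - nu)/2)); assert (0 < Rmin eta ((t - nu)/2)) by (apply Rmin_glb_lt; lra); lra).
    assert (Hr2 : r < nu + dl) by (unfold r; pose proof (Rmin_l eta ((t - nu)/2)); lra).
    assert (HFr : Fs m l r < 0) by (apply HLr; lra).
    destruct (Ranalysis5.IVT_interv (Fs m l) r t) as [z [Hz HFz]]; auto; try lra.
    { intros a Ha. apply F_cont. apply (cos_nonpole m l k); auto; try lra. intros i Hi. apply HNA; auto; lra. }
    assert (Hzt : z < t) by (destruct (Req_dec z t); [subst; lra|lra]).
    assert (HS3 : SPn m l (nu ^ 2) (z ^ 2) (length js)).
    { apply (SPn_point_mu m l nu z nu); try lra; auto. intros mu Hmu Hn. apply (not_eig_reg m l k); auto; try lra.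
      intros i Hi; apply HNA; auto; lra.
      assert (Fs m l mu < Fs m l z). { apply (F_mono m l k); auto; try lra. intros i x Hi Hx. apply HNA; auto; lra. } lra. }
    assert (HS4 : SPn m l (z ^ 2) (t ^ 2) 1).
    { apply (SPn_point_mu m l z t z); try lra; auto. apply (mult_reg1 m l k); auto; try lra. intros i Hi; apply HNA; auto; lra.
      intros mu Hmu Hn. apply (not_eig_reg m l k); auto; try lra.
      intros i Hi; apply HNA; auto; lra.
      assert (Fs m l z < Fs m l mu). { apply (F_mono m l k); auto; try lra. intros i x Hi Hx. apply HNA; auto; lra. } lra. }
    assert (Hsq4 : nu ^ 2 <= z ^ 2) by (apply pow_incr; lra).
    assert (Hsq5 : z ^ 2 <= t ^ 2) by (apply pow_incr; lra).
    assert (Hn0 : 0 <= nu ^ 2) by lra. assert (Hz0 : 0 <= z ^ 2) by lra.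
    pose proof (SPn_app _ _ _ _ _ _ _ Hn0 Hsq4 HS12 HS3) as HS123.
    pose proof (SPn_app _ _ _ _ _ _ _ Hz0 Hsq5 HS123 HS4) as HS.
    replace (qc m l t + 1)%nat with (qc m l s + 1 + 0 + length js + 1)%nat by lia. exact HS.
  - assert (HFneg : Fs m l t < 0) by lra.
    assert (HS3 : SPn m l (nu ^ 2) (t ^ 2) (length js)).
    { apply (SPn_point_mu m l nu t nu); try lra; auto. intros mu Hmu Hn. apply (not_eig_reg m l k); auto; try lra.
      intros i Hi; apply HNA; auto; lra.
      assert (Fs m l mu < Fs m l t). { apply (F_mono m l k); auto; try lra. intros i x Hi Hx. apply HNA; auto; lra. } lra. }
    assert (Hn0 : 0 <= nu ^ 2) by lra.
    pose proof (SPn_app _ _ _ _ _ _ _ Hn0 Hsq3 HS12 HS3) as HS.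
    replace (qc m l t + 0)%nat with (qc m l s + 1 + 0 + length js)%nat by lia. exact HS.
Qed.


Lemma claim m l k : good m l k -> forall N t, (qc m l t <= N)%nat -> 0 < t < k -> nonpole m l t -> Fs m l t <> 0 ->
  SPn m l 0 (t ^ 2) (qc m l t + indpos (Fs m l t)).
Proof.
  intros G N. induction N; intros t Hq Ht Hnp HF; apply (claim_step m l k); auto.
  - intros s Hs. lia.
  - intros s Hs. apply IHN. lia.
Qed.

Lemma spectral m l k : good m l k -> nonpole m l k -> Fs m l k = 0 -> spectral_position m l k (qc m l k).
Proof.
  intros G Hnpk HFk. pose proof G as [Hm [Hl [Hk Hk0]]]. pose proof PI_RGT_0 as HPI.
  assert (Hex : exists i, (i < m)%nat /\ PI / 2 < k * l i).
  { destruct (classic (exists i, (i < m)%nat /\ PI / 2 < k * l i)) as [H|H]; auto. exfalso.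
    assert (0 < Fs m l k); [|lra]. unfold Fs. rewrite <- (sumR_zero m (fun _ => 0)) by auto. apply sumR_lt; auto.
    intros i Hi. specialize (Hl i Hi). specialize (Hnpk i Hi). apply tan_gt_0. nra.
    destruct (Rlt_dec (k * l i) (PI / 2)); auto. exfalso. apply H. exists i. split; auto. lra. }
  destruct (max_exists (fun i => PI / 2 / l i) (fun i => PI / 2 < k * l i) m Hex) as [is [His [Pis Hmax]]].
  set (nu := PI / 2 / l is).
  assert (Hlis := Hl is His).
  assert (Hnul : nu * l is = PI / 2) by (unfold nu; field; lra).
  assert (Hnu0 : 0 < nu) by (unfold nu; apply Rdiv_lt_0_compat; lra).
  assert (Hnuk : nu < k) by nra.
  assert (HNA : forall i mu, (i < m)%nat -> nu < mu <= k -> mu * l i <> PI / 2).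
  { intros i mu Hi Hmu E. assert (Hli := Hl i Hi). assert (Emu : mu = PI / 2 / l i) by (rewrite <- E; field; lra).
    destruct (Req_dec mu k) as [Emt|Emt]. { rewrite Emt in E. exact (Hnpk i Hi E). }
    assert (mu * l i < k * l i) by (apply Rmult_lt_compat_r; lra). assert (PI / 2 < k * l i) by lra.
    specialize (Hmax i Hi H0). simpl in Hmax. fold nu in Hmax. lra. }
  set (t := (nu + k) / 2).
  assert (Ht : nu < t < k) by (unfold t; lra).
  assert (HFt : Fs m l t < 0).
  { rewrite <- HFk. apply (F_mono m l k); auto; try lra. intros i x Hi Hx. apply HNA; auto; lra. }
  assert (Hqt : qc m l t = qc m l k).
  { unfold qc. f_equal. apply filter_ext_in. intros i Hin. apply in_seq in Hin. assert (Hi : (i < m)%nat) by lia.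
    assert (Hli := Hl i Hi).
    destruct (Rlt_dec (PI / 2) (t * l i)), (Rlt_dec (PI / 2) (k * l i)); auto; exfalso.
    - apply n. assert (t * l i < k * l i) by (apply Rmult_lt_compat_r; lra). lra.
    - specialize (Hmax i Hi r). simpl in Hmax. fold nu in Hmax. apply n.
      assert (PI / 2 / l i < t) by lra. apply (Rmult_lt_compat_r (l i)) in H; auto.
      replace (PI / 2 / l i * l i) with (PI / 2) in H by (field; lra). lra. }
  assert (HS1 := claim m l k G (qc m l t) t (le_n _) ltac:(lra) ltac:(intros i Hi; apply HNA; auto; lra) ltac:(lra)).
  assert (Hind : indpos (Fs m l t) = 0%nat) by (unfold indpos; destruct (Rlt_dec 0 (Fs m l t)); auto; lra).
  rewrite Hind, Hqt in HS1.
  assert (HS2 : SPn m l (t ^ 2) (k ^ 2) 0).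
  { apply SPn_empty_mu; try lra. intros mu Hmu. apply (not_eig_reg m l k); auto; try lra.
    intros i Hi; apply HNA; auto; lra.
    destruct (Req_dec mu t) as [E|E]. subst mu. lra.
    assert (Fs m l mu < Fs m l k). { apply (F_mono m l k); auto; try lra. intros i x Hi Hx. apply HNA; auto; lra. } lra. }
  assert (H0 : 0 <= t ^ 2) by (apply pow_le; lra).
  assert (H1 : t ^ 2 <= k ^ 2) by (apply pow_incr; lra).
  pose proof (SPn_app _ _ _ _ _ _ _ H0 H1 HS1 HS2) as HS.
  replace (qc m l k + 0 + 0)%nat with (qc m l k) in HS by lia. exact HS.
Qed.


Lemma tan_PI_minus x : tan (PI - x) = - tan x.
Proof. unfold tan. rewrite sin_PI_x, Rtrigo_facts.cos_pi_minus. unfold Rdiv. rewrite Rinv_opp. ring. Qed.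

Lemma len_filter_true (s : list nat) : length (filter (fun _ => true) s) = length s.
Proof. induction s; simpl; auto. Qed.

Theorem lemma3p2 (m : nat) (l : nat -> R) (k : R) (f : nat -> R -> R) :
  star_graph m l ->
  0 < k ->
  generic_eigenfunction m l (k ^ 2) f ->
  no_neumann_points m l f ->
  exists (m' : nat) (l' : nat -> R),
    star_graph m' l' /\
    num_boundary m = num_boundary m' /\
    (exists f' : nat -> R -> R,
        generic_eigenfunction m' l' (k ^ 2) f' /\
        no_neumann_points m' l' f') /\
    (exists n n' : nat,
        spectral_position m l k n /\ spectral_position m' l' k n' /\
        (n + n')%nat = num_boundary m) /\
    wavelength_capacity m l k + wavelength_capacity m' l' k = INR (num_boundary m).
Proof.
  intros [Hm2 Hl] Hk [[Hf Hnz] [Hsimple [Hf0 [Hfl Hfd]]]] Hnn. pose proof PI_RGT_0 as HPI.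
  assert (Hl0 : forall i, (i < m)%nat -> 0 <= l i) by (intros i Hi; left; auto).
  destruct (sol_char m l k f Hl0 Hf) as [HC [C1 C2]].
  assert (Hkl : forall i, (i < m)%nat -> k * l i < PI).
  { intros i Hi. assert (Hli := Hl i Hi). destruct (Rlt_dec (k * l i) PI) as [H|H]; auto. exfalso.
    destruct (Req_dec (k * l i) PI) as [E|E].
    - apply (Hfd i Hi). rewrite (proj2 (HC i (l i) Hi ltac:(lra))). rewrite E, sin_PI. ring.
    - apply (Hnn i (PI / k)). split; auto. split. split. apply Rdiv_lt_0_compat; lra.
      apply (Rmult_lt_reg_l k); auto. replace (k * (PI / k)) with PI by (field; lra). lra.
      rewrite (proj2 (HC i (PI / k) Hi ltac:(split; [left; apply Rdiv_lt_0_compat; lra|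
        left; apply (Rmult_lt_reg_l k); auto; replace (k * (PI / k)) with PI by (field; lra); lra]))).
      replace (k * (PI / k)) with PI by (field; lra). rewrite sin_PI. ring. }
  assert (Hcos : forall i, (i < m)%nat -> cos (k * l i) <> 0).
  { intros i Hi E. apply (Hfl i Hi). rewrite (proj1 (HC i (l i) Hi ltac:(specialize (Hl i Hi); lra))). rewrite E. ring. }
  assert (Hm0 : (0 < m)%nat) by lia.
  assert (HFk : Fs m l k = 0).
  { set (c := f 0%nat 0 * cos (k * l 0%nat)).
    assert (Hc : c <> 0) by (unfold c; apply Rmult_integral_contrapositive; split; auto).
    assert (Ha : forall i, (i < m)%nat -> f i 0 = c / cos (k * l i)).
    { intros i Hi. unfold c. rewrite <- (C1 i 0%nat Hi Hm0). field. auto. }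
    assert (c * k * Fs m l k = 0).
    { rewrite <- C2. unfold Fs. rewrite <- sumR_scal. apply sumR_ext. intros i Hi. rewrite Ha by auto. unfold tan. field. auto. }
    apply Rmult_integral in H. destruct H; [|auto]. apply Rmult_integral in H. destruct H; lra. }
  assert (G : good m l k) by (split; auto).
  assert (Hnpk : nonpole m l k) by (intros i Hi E; apply (Hcos i Hi); rewrite E; apply cos_PI2).
  set (l' := fun i => PI / k - l i).
  assert (Hkl' : forall i, k * l' i = PI - k * l i) by (intros; unfold l'; field; lra).
  assert (Hl' : forall i, (i < m)%nat -> 0 < l' i).
  { intros i Hi. specialize (Hkl i Hi). assert (0 < k * l' i) by (rewrite Hkl'; lra). nra. }
  assert (G' : good m l' k).
  { split; auto. split; auto. split; auto. intros i Hi. rewrite Hkl'. specialize (Hl i Hi). nra. }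
  assert (Hnpk' : nonpole m l' k) by (intros i Hi E; rewrite Hkl' in E; apply (Hnpk i Hi); lra).
  assert (HFk' : Fs m l' k = 0).
  { unfold Fs. rewrite (sumR_ext _ _ (fun i => - tan (k * l i))). rewrite sumR_opp. fold (Fs m l k). rewrite HFk. ring.
    intros i Hi. rewrite Hkl'. apply tan_PI_minus. }
  assert (Hcos' : forall i, (i < m)%nat -> cos (k * l' i) <> 0) by (apply (cos_nonpole m l' k); auto; lra).
  assert (Hsin' : forall i, (i < m)%nat -> 0 < sin (k * l' i)).
  { intros i Hi. apply sin_gt_0. specialize (Hl' i Hi). nra. destruct G' as [_ [_ [H _]]]. apply H; auto. }
  set (a := fun i => / cos (k * l' i)).
  assert (Hsv : solvec m l' k a).
  { split.
    - intros i j Hi Hj. unfold a. rewrite !Rinv_l; auto.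
    - rewrite <- (Rmult_0_r k), <- HFk'. unfold Fs. rewrite <- sumR_scal. apply sumR_ext. intros i Hi. unfold a, tan. field. auto. }
  exists m, l'. split; [split; auto|]. split; [reflexivity|]. split; [|split].
  - exists (fun i x => a i * cos (k * x)). split; [split; [split|split; [|split; [|split]]]|].
    + apply sol_of_vec; auto.
    + exists 0%nat, 0. split; auto. split. split; [lra|left; apply Hl'; auto]. rewrite Rmult_0_r, cos_0, Rmult_1_r.
      unfold a. apply Rinv_neq_0_compat. auto.
    + apply (mult_reg1 m l' k k); auto; lra.
    + intros i Hi. rewrite Rmult_0_r, cos_0, Rmult_1_r. unfold a. apply Rinv_neq_0_compat. auto.
    + intros i Hi. unfold a. rewrite Rinv_l by auto. apply R1_neq_R0.
    + intros i Hi. rewrite derive_acos. unfold a. specialize (Hsin' i Hi). specialize (Hcos' i Hi).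
      replace (- (- / cos (k * l' i) * k * sin (k * l' i))) with (k * sin (k * l' i) / cos (k * l' i)) by (field; auto).
      apply Rmult_integral_contrapositive. split. apply Rmult_integral_contrapositive; split; lra. apply Rinv_neq_0_compat; auto.
    + intros i x [Hi [Hx E]]. rewrite derive_acos in E. unfold a in E.
      assert (0 < sin (k * x)). { apply sin_gt_0. nra. assert (k * x < k * l' i) by (apply Rmult_lt_compat_l; lra). destruct G' as [_ [_ [HH _]]]. specialize (HH i Hi). lra. }
      specialize (Hcos' i Hi). assert (/ cos (k * l' i) <> 0) by (apply Rinv_neq_0_compat; auto).
      apply Rmult_integral in E. destruct E as [E|E]; [|lra]. apply Rmult_integral in E. destruct E as [E|E]; [|lra]. lra.
  - exists (qc m l k), (qc m l' k). split; [apply spectral; auto|split; [apply spectral; auto|]].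
    unfold num_boundary. rewrite <- (length_seq m 0) at 3. rewrite <- len_filter_true.
    unfold qc. symmetry. apply cnt_split. intros i Hi. assert (Hli := Hl i Hi). specialize (Hnpk i Hi). rewrite Hkl'.
    destruct (Rlt_dec (PI / 2) (k * l i)), (Rlt_dec (PI / 2) (PI - k * l i)); split; try lra; intuition; try discriminate.
  - unfold wavelength_capacity, total_length, num_boundary.
    assert (sumR m l' = INR m * (PI / k) - sumR m l).
    { unfold l'. rewrite (sumR_ext _ _ (fun i => PI / k + - l i)) by (intros; ring). rewrite sumR_plus, sumR_const, sumR_opp. ring. }
    rewrite H. field. lra.
Qed.
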